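(* Let $R$ be a commutative ring. Then $R$ is von Neumann regular if and only if every nonzero indecomposable $R$-module is simple.
   Context: All rings are commutative with identity; $R$ is von Neumann regular if for every $a\in R$ there is $x\in R$ with $a=a^2x$. *)

(* Defs.v *)
From mathcomp Require Import all_boot all_algebra.
Set Implicit Arguments. Unset Strict Implicit. Unset Printing Implicit Defensive.
Import GRing.Theory.
Local Open Scope ring_scope.

Definition von_neumann_regular (R : comPzRingType) : Prop :=
  forall a : R, exists x : R, a = a ^+ 2 * x.

Definition is_submodule (R : comPzRingType) (M : lmodType R) (S : M -> Prop) : Prop :=
  [/\ S 0, (forall x y, S x -> S y -> S (x + y)) & (forall (r : R) x, S x -> S (r *: x))].

Definition nonzero_module (R : comPzRingType) (M : lmodType R) : Prop :=
  exists m : M, m <> 0.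

Definition simple_module (R : comPzRingType) (M : lmodType R) : Prop :=
  nonzero_module M /\
  forall S : M -> Prop, is_submodule S ->
    (forall x, S x -> x = 0) \/ (forall x, S x).

Definition indecomposable_module (R : comPzRingType) (M : lmodType R) : Prop :=
  nonzero_module M /\
  forall A B : M -> Prop, is_submodule A -> is_submodule B ->
    (forall x : M, exists a b, [/\ A a, B b & x = a + b]) ->
    (forall x : M, A x -> B x -> x = 0) ->
    (forall x, A x -> x = 0) \/ (forall x, B x -> x = 0).

(* Main.v *)
Require Import Defs.
From HB Require Import structures.
From mathcomp Require Import all_boot all_algebra ring_quotient generic_quotient.
From mathcomp Require Import ring.
From mathcomp Require Import boolp classical_sets.
Set Implicit Arguments. Unset Strict Implicit. Unset Printing Implicit Defensive.
Import GRing.Theory.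
Local Open Scope ring_scope.
Local Open Scope quotient_scope.

Lemma zorn_gen (S T : Type) (add : T -> T -> T) (act : S -> T -> T) (G : T -> Prop) :
  exists A : T -> Prop, [/\ (forall x y, A x -> A y -> A (add x y)),
    (forall r x, A x -> A (act r x)), (forall x, A x -> G x) &
    forall B : T -> Prop, (forall x, A x -> B x) ->
      (forall x y, B x -> B y -> B (add x y)) -> (forall r x, B x -> B (act r x)) ->
      (forall x, B x -> G x) -> forall x, B x -> A x].
Proof.
pose P : set (set T) := fun B => [/\ (forall x y, B x -> B y -> B (add x y)),
    (forall r x, B x -> B (act r x)) & (forall x, B x -> G x)].
have [|A [[PA1 PA2 PA3] Amax]] := @Zorn_bigcup T P.
  move=> F FP Ftot; split.
  - move=> x y [X FX Xx] [Y FY Yy].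
    have [XY|YX] := Ftot X Y FX FY.
      by exists Y => //; have [+ _ _] := FP Y FY; apply; [apply: XY|].
    by exists X => //; have [+ _ _] := FP X FX; apply; [|apply: YX].
  - by move=> r x [X FX Xx]; exists X => //; have [_ + _] := FP X FX; apply.
  - by move=> x [X FX Xx]; have [_ _ +] := FP X FX; apply.
exists A; split => // B AB B1 B2 B3 x Bx.
apply: contrapT => nAx; apply: (Amax B) => //; split => // BA.
by apply: nAx; apply: BA.
Qed.

Section Quot.
Variable R : comPzRingType.
Variable I : R -> Prop.
Hypothesis HI : I 0 /\ (forall x y, I x -> I y -> I (x - y)) /\ (forall r x, I x -> I (r * x)).
Let I0 : I 0. Proof. by case: HI. Qed.
Let IB : forall x y, I x -> I y -> I (x - y). Proof. by case: HI => _ []. Qed.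
Let IM : forall r x, I x -> I (r * x). Proof. by case: HI => _ []. Qed.

Definition Ib : {pred R} := fun x => `[< I x >].
Lemma Ib_zmod : zmod_closed Ib.
Proof.
split; first exact/asboolP.
by move=> x y /asboolP Hx /asboolP Hy; apply/asboolP; apply: IB.
Qed.
HB.instance Definition _ := GRing.isZmodClosed.Build R Ib Ib_zmod.

Definition Q := Quotient.quot (Ib : zmodClosed R).
Definition Qscale (r : R) (q : Q) : Q := \pi_Q (r * repr q).

Lemma piQ_eq x y : I (x - y) -> \pi_Q x = \pi_Q y.
Proof. by move=> H; apply/eqquotP; rewrite Quotient.equivE; apply/asboolP. Qed.

Lemma piQ_eqI x y : \pi_Q x = \pi_Q y -> I (x - y).
Proof. by move=> /eqquotP; rewrite Quotient.equivE => /asboolP. Qed.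

Lemma QscaleE r x : Qscale r (\pi_Q x) = \pi_Q (r * x).
Proof.
rewrite /Qscale; apply: piQ_eq; rewrite -mulrBr; apply: IM.
by apply: piQ_eqI; rewrite reprK.
Qed.

Lemma Qind (P : Q -> Prop) : (forall x, P (\pi_Q x)) -> forall v, P v.
Proof. by move=> H v; rewrite -[v]reprK; apply: H. Qed.

Lemma QscaleA a b v : Qscale a (Qscale b v) = Qscale (a * b) v.
Proof. by elim/Qind: v => x; rewrite !QscaleE mulrA. Qed.
Lemma Qscale1 : left_id 1 Qscale.
Proof. by elim/Qind => x; rewrite !QscaleE mul1r. Qed.
Lemma piQ_add x y : \pi_Q (x + y) = \pi_Q x + \pi_Q y.
Proof. exact: Quotient.pi_add. Qed.
Lemma QscaleDr : right_distributive Qscale +%R.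
Proof.
move=> a u v; elim/Qind: u => x; elim/Qind: v => y.
by rewrite -piQ_add !QscaleE mulrDr piQ_add.
Qed.
Lemma QscaleDl v : {morph Qscale^~ v: a b / a + b}.
Proof.
move=> a b; elim/Qind: v => x.
by rewrite !QscaleE mulrDl piQ_add.
Qed.

Definition QM := Q.
HB.instance Definition _ := GRing.Zmodule.on QM.
HB.instance Definition _ := GRing.Zmodule_isLmodule.Build R QM QscaleA Qscale1 QscaleDr QscaleDl.

Lemma QM_scaleE r x : r *: (\pi_Q x : QM) = \pi_Q (r * x).
Proof. exact: QscaleE. Qed.
Definition piM (x : R) : QM := \pi_Q x.
Lemma piM_scale r x : r *: piM x = piM (r * x).
Proof. exact: QscaleE. Qed.
Lemma piM_eq0 x : piM x = 0 <-> I x.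
Proof.
have z : piM 0 = 0 by rewrite -(mul0r 0) -piM_scale scale0r.
split=> [h|h].
  by have := @piQ_eqI x 0; rewrite subr0; apply; rewrite -/(piM x) h -z.
by rewrite -z; apply: piQ_eq; rewrite subr0.
Qed.
Lemma piM_surj (q : QM) : exists x, q = piM x.
Proof. by exists (repr (q : Q)); rewrite /piM reprK. Qed.
End Quot.

Section Dir1.
Variable R : comPzRingType.
Hypothesis vnr : von_neumann_regular R.
Variable M : lmodType R.
Hypothesis ind : indecomposable_module M.

Lemma dichot (r : R) : (forall m : M, r *: m = 0) \/ exists r', forall m : M, r' *: (r *: m) = m.
Proof.
have [x hx] := vnr r.
pose e := r * x.
have ee : e * e = e by rewrite /e [in RHS]hx; ring.
have [_ H] := ind.
have := H (fun m => e *: m = m) (fun m => e *: m = 0).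
case.
- split; first by rewrite scaler0.
  + by move=> u v hu hv; rewrite scalerDr hu hv.
  + by move=> c u hu; rewrite scalerA mulrC -scalerA hu.
- split; first by rewrite scaler0.
  + by move=> u v hu hv; rewrite scalerDr hu hv addr0.
  + by move=> c u hu; rewrite scalerA mulrC -scalerA hu scaler0.
- move=> m; exists (e *: m), (m - e *: m); split.
  + by rewrite scalerA ee.
  + by rewrite scalerDr scalerN scalerA ee subrr.
  + by rewrite addrC subrK.
- by move=> m h1 h2; rewrite -h1 h2.
- move=> hA; left => m.
  have em : e *: m = 0 by apply: hA; rewrite scalerA ee.
  by rewrite hx expr2 -mulrA -/e -scalerA em scaler0.
- move=> hB; right; exists x => m.
  have : m - e *: m = 0.
    by apply: hB; rewrite scalerDr scalerN scalerA ee subrr.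
  by move/eqP; rewrite subr_eq0 => /eqP h; rewrite [RHS]h scalerA /e mulrC.
Qed.

Lemma dir1 : simple_module M.
Proof.
have [nz H] := ind.
split => // S [S0 SD SZ].
case: (EM (forall x, S x -> x = 0)) => [h|h]; first by left.
right.
have [s [Ss s0]] : exists s, S s /\ s <> 0.
  apply: contrapT => nex; apply: h => x Sx; apply: contrapT => x0.
  by apply: nex; exists x.
have [A [A1 A2 A3 Amax]] := @zorn_gen R M +%R *:%R (fun x => forall c, x = c *: s -> x = 0).
pose A' t := A t \/ t = 0.
have A'D : forall u v, A' u -> A' v -> A' (u + v).
  move=> u v [hu|->] [hv|->].
  - by left; apply: A1.
  - by rewrite addr0; left.
  - by rewrite add0r; left.
  - by rewrite addr0; right.
have A'Z : forall c u, A' u -> A' (c *: u).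
  move=> c u [hu|->]; first by left; apply: A2.
  by rewrite scaler0; right.
have A'G : forall u c, A' u -> u = c *: s -> u = 0.
  by move=> u c [hu|->] // e; apply: A3 e.
have claim : forall y, exists t c, A' t /\ y = t + c *: s.
  move=> y0; apply: contrapT => Hn.
  pose B x := exists t r, A' t /\ x = t + r *: y0.
  have By0 : B y0 by exists 0, 1; split; [right|]; rewrite ?add0r ?scale1r.
  have : A y0.
    apply: (Amax B) => //.
    - by move=> x Ax; exists x, 0; split; [left|]; rewrite ?scale0r ?addr0.
    - move=> x y [t1 [r1 [h1 ->]]] [t2 [r2 [h2 ->]]].
      exists (t1 + t2), (r1 + r2); split; first exact: A'D.
      by rewrite scalerDl; rewrite addrACA.
    - move=> c x [t1 [r1 [h1 ->]]]; exists (c *: t1), (c * r1); split; first exact: A'Z.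
      by rewrite scalerDr scalerA.
    - move=> x [t [r [ht ->]]] c e.
      case: (dichot r) => [hr|[r' hr']].
        by rewrite hr addr0 in e *; apply: A'G e.
      exfalso; apply: Hn; exists ((- r') *: t), (r' * c); split; first exact: A'Z.
      have : r *: y0 = c *: s - t by rewrite -e addrC addKr.
      move=> e2; rewrite -[y0 in LHS]hr' e2 scalerDr scalerN scalerA scaleNr addrC.
      by [].
  by move=> Ay0; apply: Hn; exists y0, 0; split; [left|]; rewrite ?scale0r ?addr0.
have := H A' (fun x => exists c, x = c *: s).
case.
- split; [by right| exact: A'D| exact: A'Z].
- split; first by exists 0; rewrite scale0r.
  + by move=> u v [c1 ->] [c2 ->]; exists (c1 + c2); rewrite scalerDl.
  + by move=> c u [c1 ->]; exists (c * c1); rewrite scalerA.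
- move=> y; have [t [c [ht ->]]] := claim y; exists t, (c *: s); split => //.
  by exists c.
- by move=> x hx [c hc]; apply: A'G hc.
- move=> hA y; have [t [c [ht ->]]] := claim y.
  rewrite (hA t ht) add0r; exact: SZ.
- by move=> hC; exfalso; apply: s0; apply: hC; exists 1; rewrite scale1r.
Qed.
End Dir1.

Section Dir2.
Variable R : comPzRingType.
Hypothesis HM : forall M : lmodType R, nonzero_module M -> indecomposable_module M -> simple_module M.

Lemma dir2 : von_neumann_regular R.
Proof.
move=> a; apply: contrapT => Hn.
have [A [A1 A2 A3 Amax]] := @zorn_gen R R +%R *%R (fun t => forall r, a <> t + r * a ^+ 2).
pose A' t := A t \/ t = 0.
have A'D : forall u v, A' u -> A' v -> A' (u + v).
  move=> u v [hu|->] [hv|->].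
  - by left; apply: A1.
  - by rewrite addr0; left.
  - by rewrite add0r; left.
  - by rewrite addr0; right.
have A'M : forall c u, A' u -> A' (c * u).
  move=> c u [hu|->]; first by left; apply: A2.
  by rewrite mulr0; right.
have A'B : forall u v, A' u -> A' v -> A' (u - v).
  by move=> u v hu hv; rewrite -mulN1r; apply: A'D => //; rewrite -mulN1r; apply: A'M.
pose I x := exists t r, A' t /\ x = t + r * a ^+ 2.
have HI : I 0 /\ (forall x y, I x -> I y -> I (x - y)) /\ (forall r x, I x -> I (r * x)).
  split; first by exists 0, 0; split; [by right| by rewrite mul0r addr0].
  split.
  - move=> x y [t1 [r1 [h1 ->]]] [t2 [r2 [h2 ->]]].
    exists (t1 - t2), (r1 - r2); split; first exact: A'B.
    by rewrite mulrBl opprD addrACA.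
  - move=> c x [t1 [r1 [h1 ->]]]; exists (c * t1), (c * r1); split; first exact: A'M.
    by rewrite mulrDr mulrA.
have K1 : ~ I a.
  move=> [t [r [[ht|->] e]]]; first exact: (A3 t ht r e).
  by apply: Hn; exists r; rewrite {1}e add0r mulrC.
have K2 : I (a ^+ 2) by exists 0, 1; split; [by right| by rewrite add0r mul1r].
have K3 : forall u, ~ I u -> exists i c, I i /\ a = i + c * u.
  move=> u Iu; apply: contrapT => Hu.
  pose B x := exists t r, A' t /\ x = t + r * u.
  have Bu : B u by exists 0, 1; split; [by right| by rewrite add0r mul1r].
  have : A u.
    apply: (Amax B) => //.
    - by move=> x Ax; exists x, 0; split; [by left| by rewrite mul0r addr0].
    - move=> x y [t1 [r1 [h1 ->]]] [t2 [r2 [h2 ->]]].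
      exists (t1 + t2), (r1 + r2); split; first exact: A'D.
      by rewrite mulrDl addrACA.
    - move=> c x [t1 [r1 [h1 ->]]]; exists (c * t1), (c * r1); split; first exact: A'M.
      by rewrite mulrDr mulrA.
    - move=> x [t [r [ht ->]]] r' e.
      apply: Hu; exists (t + r' * a ^+ 2), r; split; first by exists t, r'.
      by rewrite {1}e addrAC.
  by move=> Au; apply: Iu; exists u, 0; split; [by left| by rewrite mul0r addr0].
pose M := QM HI.
pose pi := @piM R I HI.
have pia : pi a <> 0 by move=> /piM_eq0.
have piE : forall x y, I (x - y) -> pi x = pi y.
  by move=> x y h; apply: (piQ_eq HI h).
have nz : nonzero_module (QM HI) by exists (pi a).
have indM : indecomposable_module (QM HI).
  split => // A0 B0 [A00 A0D A0Z] [B00 B0D B0Z] dec inter.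
  have key : forall C : QM HI -> Prop, (forall c x, C x -> C (c *: x)) ->
      forall p, C p -> p <> 0 -> C (pi a).
    move=> C CZ p Cp p0.
    have [u pu] := piM_surj p.
    have Iu : ~ I u by move=> /piM_eq0 h; apply: p0; rewrite pu; exact: h.
    have [i [c [Ii e]]] := K3 u Iu.
    have -> : pi a = pi (c * u) by apply: piE; rewrite e addrK.
    by rewrite /pi -piM_scale -pu; apply: CZ.
  case: (EM (forall x, A0 x -> x = 0)) => hA; first by left.
  right => y By; apply: contrapT => y0.
  apply: hA => p Ap; apply: contrapT => p0.
  apply: pia; apply: inter; [exact: (key A0 A0Z p Ap p0) | exact: (key B0 B0Z y By y0)].
have [_ Hs] := HM nz indM.
have := Hs (fun q => a *: q = 0).
case.
- split; first by rewrite scaler0.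
  + by move=> u v hu hv; rewrite scalerDr hu hv addr0.
  + by move=> c u hu; rewrite scalerA mulrC -scalerA hu scaler0.
- move=> h; apply: pia; apply: h.
  by rewrite piM_scale -expr2; apply/piM_eq0.
- by move=> h; apply: pia; have := h (pi 1); rewrite piM_scale mulr1.
Qed.
End Dir2.

Theorem theorem2p11 (R : comPzRingType) :
  von_neumann_regular R <->
  (forall M : lmodType R, nonzero_module M -> indecomposable_module M -> simple_module M).
Proof.
split; first by move=> vnr M _ ind; apply: dir1.
exact: dir2.
Qed.
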